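(* Let $G$ be a board that is symmetric under reflection across some line, with no edges lying along that axis of symmetry and at most one edge crossing that axis. If no edge crosses the axis of symmetry, then Player~2 has a winning strategy in the Game of Cycles on $G$. If a single edge crosses the axis of symmetry, then Player~1 has a winning strategy.
   Context: The Game of Cycles. A board is a simple connected planar graph embedded in the plane, together with its bounded cells; here the embedded board is invariant under reflection across a line. Two players alternate turns; on a turn a player marks one unmarked edge with an arrow pointing along the edge in one of its two directions. Each edge receives at most one arrow, and arrows have the same effect regardless of who placed them. Moves must obey the sink-source rule: no move may create a sink (a vertex all of whose incident edges are marked with arrows pointing toward it) or a source (a vertex all of whose incident edges are marked with arrows pointing away from it). A player who has a legal move must make one. A cycle cell is a bounded cell all of whose boundary edges are marked with arrows all cycling in the same direction around that cell. The first player to create a cycle cell wins; if play ends (no legal move remains) without a cycle cell, the player who made the last move wins. A winning strategy guarantees a win regardless of the opponent's moves. *)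

(* Defs.v *)
(* Boards are encoded as plane combinatorial maps (rotation systems). *)
From mathcomp Require Import all_boot fingroup perm.
Set Implicit Arguments. Unset Strict Implicit. Unset Printing Implicit Defensive.

(* A board is given by:
   - a finite type D of darts (half-edges, i.e. oriented edges);
   - alpha : the fixed-point-free involution sending a dart to its reverse
     (the edge of d is {d, alpha d}; d goes from tail(d) to tail(alpha d));
   - rho   : the rotation; the vertices are the rho-orbits, the rho-orbit of d
     being the set of darts whose tail is that vertex (counterclockwise order);
   - faces : the orbits of phi := fun d => rho (alpha d) (boundary walks of the
     cells, all traversed in the same rotational sense);
   - outer : a dart of the unbounded face; the bounded cells are the other faces. *)

Section Board.
Variables (D : finType) (alpha rho : {perm D}) (outer : D).

Definition phi (d : D) : D := rho (alpha d).

Definition plane_board : Prop :=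
  [/\ (forall d, alpha (alpha d) = d) /\ (forall d, alpha d != d),
      (forall x y : D, connect (fun u v => (v == alpha u) || (v == rho u)) x y),
      (* genus 0 (Euler's formula V - E + F = 2, faces including the outer one) *)
      fcard rho D + fcard phi D = #|D| %/ 2 + 2,
      (* no loops *)
      (forall d, ~~ fconnect rho d (alpha d)) &
      (* no multiple edges *)
      (forall d d', fconnect rho d d' -> fconnect rho (alpha d) (alpha d') -> d = d')].

(* tau is a reflection symmetry of the plane board: an involutive,
   orientation-reversing automorphism of the map preserving the unbounded face. *)
Definition reflection_symmetry (tau : {perm D}) : Prop :=
  [/\ (forall d, tau (tau d) = d),
      (forall d, tau (alpha d) = alpha (tau d)),
      (forall d, rho (tau (rho d)) = tau d) &
      (* tau maps the face of d onto the face of alpha (tau d); it fixes the outer face *)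
      fconnect phi outer (alpha (tau outer))].

(* Game positions: M is the set of darts d whose edge carries an arrow from
   tail(d) to tail(alpha d). *)

Definition has_sink_or_source (M : {set D}) : bool :=
  [exists x, [forall y, fconnect rho x y ==> (alpha y \in M)]
          || [forall y, fconnect rho x y ==> (y \in M)]].

Definition legal (M : {set D}) (d : D) : bool :=
  [&& d \notin M, alpha d \notin M & ~~ has_sink_or_source (d |: M)].

Definition has_cycle_cell (M : {set D}) : bool :=
  [exists x, ~~ fconnect phi outer x &&
     ([forall y, fconnect phi x y ==> (y \in M)]
      || [forall y, fconnect phi x y ==> (alpha y \in M)])].

(* winning M : the player about to move from position M has a winning strategy;
   losing M  : the player about to move from M has no winning strategy, i.e. the
   opponent (who just moved) has one. Positions considered contain no cycle cell.
   A player creating a cycle cell wins at once; a player with no legal move has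
   lost, since the opponent made the last move. *)
Inductive winning (M : {set D}) : Prop :=
  | Winning d : legal M d -> has_cycle_cell (d |: M) \/ losing (d |: M) -> winning M
with losing (M : {set D}) : Prop :=
  | Losing : (forall d, legal M d -> ~~ has_cycle_cell (d |: M) /\ winning (d |: M)) ->
             losing M.

Definition player1_wins : Prop := winning set0.
Definition player2_wins : Prop := losing set0.

End Board.

(* Main.v *)
Require Import Defs.
From mathcomp Require Import all_boot fingroup perm.
From Stdlib Require Import Classical.
From mathcomp Require Import zify.
Set Implicit Arguments. Unset Strict Implicit. Unset Printing Implicit Defensive.

Lemma conj_fconnect (T : finType) (f g : T -> T) : injective f ->
  (forall d, f (g (f d)) = g d) -> forall a b, fconnect f a b -> fconnect f (g a) (g b).
Proof.
move=> fi H a b /iter_findex <-.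
have E : forall n, iter n f (g (iter n f a)) = g a.
  by elim=> [|n IH] //; rewrite iterSr iterS H IH.
rewrite fconnect_sym //.
rewrite -[X in fconnect _ _ X](E (findex f a b)); exact: fconnect_iter.
Qed.

Section Game.
Variables (D : finType) (alpha rho tau : {perm D}) (outer : D).
Hypothesis Ha2 : forall d, alpha (alpha d) = d.
Hypothesis Ha1 : forall d, alpha d != d.
Hypothesis Hloop : forall d, ~~ fconnect rho d (alpha d).
Hypothesis Hmulti : forall d d', fconnect rho d d' -> fconnect rho (alpha d) (alpha d') -> d = d'.
Hypothesis Ht2 : forall d, tau (tau d) = d.
Hypothesis Hta : forall d, tau (alpha d) = alpha (tau d).
Hypothesis Htr : forall d, rho (tau (rho d)) = tau d.
Hypothesis Hout : fconnect (phi alpha rho) outer (alpha (tau outer)).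
Hypothesis Htd : forall d, tau d != d.

Local Notation ph := (phi alpha rho).
Definition sig (d : D) := alpha (tau d).
Definition fo (o : bool) (y : D) := if o then y else alpha y.
Definition S o x y := fconnect ph x (fo o y).
Definition bnd x := ~~ fconnect ph outer x.
Definition sink (M : {set D}) x := [forall y, fconnect rho x y ==> (alpha y \in M)].
Definition src (M : {set D}) x := [forall y, fconnect rho x y ==> (y \in M)].
Definition disj (M : {set D}) := forall y, y \in M -> alpha y \notin M.
Definition sigclosed (M : {set D}) := forall y, (sig y \in M) = (y \in M).

Lemma sigK d : sig (sig d) = d.
Proof. by rewrite /sig Hta Ha2 Ht2. Qed.
Lemma sig_inj : injective sig.
Proof. exact: (can_inj sigK). Qed.
Lemma sigA d : sig (alpha d) = alpha (sig d).
Proof. by rewrite /sig Hta. Qed.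
Lemma fo_sig o y : fo o (sig y) = sig (fo o y).
Proof. by case: o => //=; rewrite sigA. Qed.
Lemma foK o y : fo o (fo o y) = y.
Proof. by case: o => //=. Qed.
Lemma alpha_inj : injective alpha.
Proof. exact: perm_inj. Qed.
Lemma ph_inj : injective ph.
Proof. by move=> a b; rewrite /phi => /perm_inj /perm_inj. Qed.
Lemma rho_tau a b : fconnect rho a b -> fconnect rho (tau a) (tau b).
Proof. apply: conj_fconnect => //; exact: perm_inj. Qed.
Lemma ph_sig d : ph (sig (ph d)) = sig d.
Proof. by rewrite /phi /sig Ha2 Htr Hta. Qed.
Lemma S_sig o x y : S o x y -> S o (sig x) (sig y).
Proof. rewrite /S fo_sig; apply: conj_fconnect; [exact: ph_inj| exact: ph_sig]. Qed.
Lemma S_sig' o x y : S o (sig x) y -> S o x (sig y).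
Proof. by move/S_sig; rewrite sigK. Qed.
Lemma bnd_sig x : bnd x -> bnd (sig x).
Proof.
apply: contra => H; have := S_sig (o:=true) H; rewrite /S /= sigK => H2.
have Ho : fconnect ph outer (sig outer) := Hout.
exact: (connect_trans Ho H2).
Qed.
Lemma phsym a b : fconnect ph a b = fconnect ph b a.
Proof. apply: fconnect_sym; exact: ph_inj. Qed.
Lemma S_trans o x x' y w : S o x y -> S o x' y -> S o x w -> S o x' w.
Proof.
rewrite /S => H1 H2 H3; apply: (connect_trans H2).
rewrite phsym; apply: (connect_trans _ H1); by rewrite phsym.
Qed.
Lemma rsym a b : fconnect rho a b = fconnect rho b a.
Proof. apply: fconnect_sym; exact: perm_inj. Qed.
Lemma nofix z : rho (alpha z) != z.
Proof.
apply/eqP => E; move: (Hloop z); rewrite rsym; have := fconnect1 rho (alpha z); rewrite E => -> //.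
Qed.
Lemma nofix' z : rho z != alpha z.
Proof. by apply/eqP => E; move: (nofix (alpha z)); rewrite Ha2 E eqxx. Qed.

Lemma nbrs o x z : S o x z -> exists p q, [/\ S o x p, S o x q, p != z, q != z &
  fconnect rho z (alpha p) /\ fconnect rho (alpha z) q].
Proof.
case: o; rewrite /S /= => Hz.
- have hp : ph (alpha ((rho^-1)%g z)) = z by rewrite /phi Ha2 permKV.
  have hr : rho ((rho^-1)%g z) = z by rewrite permKV.
  move: hp hr; set r := (rho^-1)%g z => hp hr.
  exists (alpha r), (ph z); split.
  + apply: (connect_trans Hz); rewrite phsym; have := fconnect1 ph (alpha r); by rewrite hp.
  + exact: (connect_trans Hz (fconnect1 _ _)).
  + apply/eqP => E; move: (nofix z); rewrite -{1}E Ha2 hr eqxx //.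
  + exact: nofix.
  + split; last exact: fconnect1.
    rewrite Ha2 rsym; have := fconnect1 rho r; by rewrite hr.
- have hr : rho ((rho^-1)%g (alpha z)) = alpha z by rewrite permKV.
  move: hr; set r := (rho^-1)%g (alpha z) => hr.
  exists (alpha (rho z)), r; split.
  + rewrite Ha2; apply: (connect_trans Hz); have := fconnect1 ph (alpha z); by rewrite /phi Ha2.
  + apply: (connect_trans Hz); rewrite phsym; have := fconnect1 ph (alpha r); by rewrite /phi Ha2 hr.
  + apply/eqP => E; have E' : rho z = alpha z by rewrite -[rho z]Ha2 E.
    by move: (nofix' z); rewrite E' eqxx.
  + apply/eqP => E; rewrite E in hr.
    by move: (nofix' z); rewrite hr eqxx.
  + split; first by rewrite Ha2; apply: fconnect1.
    rewrite rsym; have := fconnect1 rho r; by rewrite hr.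
Qed.

Local Notation hcc := (has_cycle_cell alpha rho outer).
Local Notation hss := (has_sink_or_source alpha rho).
Local Notation lg := (legal alpha rho).

Lemma cyc_ex (M : {set D}) : hcc M -> exists x o, bnd x /\ (forall y, S o x y -> y \in M).
Proof.
case/existsP => x /andP [Hb /orP [H|H]].
- exists x, true; split => // y Hy; exact: (implyP (forallP H y)).
- exists x, false; split => // y Hy; rewrite -[y]Ha2; exact: (implyP (forallP H _)).
Qed.

Lemma cyc_of (M : {set D}) x o : bnd x -> (forall y, S o x y -> y \in M) -> hcc M.
Proof.
move=> Hb H; apply/existsP; exists x; apply/andP; split; first exact: Hb.
case: o H => H.
- by apply/orP; left; apply/forallP => y; apply/implyP => Hy; apply: H.
- apply/orP; right; apply/forallP => y; apply/implyP => Hy; apply: H.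
  by rewrite /S /= Ha2.
Qed.

Lemma hss_E (M : {set D}) : hss M = [exists x, sink M x || src M x].
Proof. by []. Qed.

Lemma complete_legal (M : {set D}) o x z : disj M -> ~~ hss M -> S o x z -> z \notin M ->
  alpha z \notin M -> (forall y, S o x y -> y != z -> y \in M) -> lg M z.
Proof.
move=> Hd Hs Hz zM azM Hall.
rewrite /legal zM azM /=; rewrite hss_E; apply/negP => /existsP [v Hv].
have [p [q [Sp Sq pz qz [Hp Hq]]]] := nbrs Hz.
have pM := Hall p Sp pz; have qM := Hall q Sq qz.
have az1 : alpha z \notin z |: M by rewrite !inE negb_or Ha1.
have [Cz|Cz] := boolP (fconnect rho v z).
  case/orP: Hv => H.
  - by move: (implyP (forallP H z) Cz); rewrite (negbTE az1).
  - have := implyP (forallP H (alpha p)) (connect_trans Cz Hp).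
    rewrite !inE (negbTE (Hd p pM)) orbF => /eqP E.
    by move: azM; rewrite -E Ha2 pM.
have [Caz|Caz] := boolP (fconnect rho v (alpha z)).
  case/orP: Hv => H.
  - have := implyP (forallP H q) (connect_trans Caz Hq).
    rewrite !inE (negbTE (Hd q qM)) orbF => /eqP E.
    by move: azM; rewrite -E Ha2 qM.
  - by move: (implyP (forallP H (alpha z)) Caz); rewrite (negbTE az1).
move/negP: Hs; apply; rewrite hss_E; apply/existsP; exists v.
case/orP: Hv => H; apply/orP; [left|right]; apply/forallP => y; apply/implyP => Hy.
- move: (implyP (forallP H y) Hy); rewrite !inE => /orP [/eqP E|//].
  by move: Caz; rewrite -E Ha2 Hy.
- move: (implyP (forallP H y) Hy); rewrite !inE => /orP [/eqP E|//].
  by move: Cz; rewrite -E Hy.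
Qed.

Lemma sink_src (N : {set D}) x : sigclosed N -> src N x -> sink N (tau x).
Proof.
move=> Hc H; apply/forallP => y; apply/implyP => Hy.
have := rho_tau Hy; rewrite Ht2 => Hy'.
by have := implyP (forallP H _) Hy'; rewrite -Hc /sig Ht2.
Qed.

Lemma src_sink (N : {set D}) x : sigclosed N -> sink N x -> src N (tau x).
Proof.
move=> Hc H; apply/forallP => y; apply/implyP => Hy.
have := rho_tau Hy; rewrite Ht2 => Hy'.
have := implyP (forallP H _) Hy' => h; rewrite -(Hc y); exact: h.
Qed.

Lemma sigclosed_add2 (M : {set D}) d : sigclosed M -> sigclosed (sig d |: (d |: M)).
Proof.
move=> Hc y; rewrite !inE Hc (inj_eq sig_inj) (can2_eq sigK sigK).
by rewrite orbCA.
Qed.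

Lemma mirror_legal (M : {set D}) d : sigclosed M -> lg M d -> tau d != alpha d ->
  lg (d |: M) (sig d).
Proof.
move=> Hc /and3P [dM adM Hs] Hcr.
have sd : sig d != d.
  by apply: contra Hcr => /eqP E; rewrite -[tau d]Ha2 -/(sig d) E.
rewrite /legal !inE negb_or sd Hc dM /=.
have -> : alpha (sig d) = tau d by rewrite /sig Ha2.
rewrite negb_or Htd /= -Hc /sig Ht2 adM /=.
set N := _ |: _.
have HcN : sigclosed N by rewrite /N -/(sig d); exact: sigclosed_add2.
have nosink : forall x, ~~ sink N x.
  move=> x; apply/negP => Hsk.
  have Hsr := src_sink HcN Hsk.
  have nsk : ~~ sink (d |: M) x by apply: contra Hs => H; rewrite hss_E; apply/existsP; exists x; rewrite H.
  have nsr : ~~ src (d |: M) (tau x) by apply: contra Hs => H; rewrite hss_E; apply/existsP; exists (tau x); rewrite H orbT.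
  case/forallPn: nsk => y; rewrite negb_imply => /andP [xy ay].
  have := implyP (forallP Hsk y) xy; rewrite /N in_setU1 (negbTE ay) orbF => /eqP E.
  have ey : y = tau d by apply: alpha_inj; rewrite E.
  case/forallPn: nsr => w; rewrite negb_imply => /andP [xw wy].
  have := implyP (forallP Hsr w) xw; rewrite /N in_setU1 (negbTE wy) orbF => /eqP ew.
  have := rho_tau xw; rewrite Ht2 ew Hta Ht2 => xad.
  rewrite ey in xy.
  have adtd : fconnect rho (alpha d) (tau d) by apply: (connect_trans _ xy); rewrite rsym.
  have E2 : alpha d = tau d.
    apply: Hmulti => //; rewrite Ha2.
    by have := rho_tau adtd; rewrite Ht2 Hta rsym.
  by move: Hcr; rewrite E2 eqxx.
rewrite hss_E; apply/existsPn => x; rewrite negb_or nosink /=.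
apply/negP => H; have := sink_src HcN H; by move/negP: (nosink (tau x)).
Qed.

Definition crossm (M : {set D}) := forall y, tau y = alpha y -> (y \in M) || (alpha y \in M).
Definition good (M : {set D}) := forall x o, bnd x ->
  (exists y, S o x y /\ alpha y \in M) \/
  (exists z1 z2, [/\ z1 != z2, S o x z1, S o x z2, z1 \notin M & z2 \notin M]).
Definition Inv (M : {set D}) := [/\ sigclosed M, disj M, ~~ hss M, crossm M & good M].

Lemma disj_add (M : {set D}) a : disj M -> lg M a -> disj (a |: M).
Proof.
move=> Hd /and3P [aM aaM _] y; rewrite !in_setU1 => /orP [/eqP ->|yM].
  by rewrite negb_or Ha1.
rewrite negb_or (Hd y yM) andbT; apply/eqP => E.
by move: aaM; rewrite -E Ha2 yM.
Qed.

Lemma card_lt (M : {set D}) a : a \notin M -> #|~: (a |: M)| < #|~: M|.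
Proof.
move=> aM; have := cardsC M; have := cardsC (a |: M); rewrite cardsU1 aM /=; lia.
Qed.

Lemma main n (M : {set D}) : #|~: M| <= n -> Inv M -> losing alpha rho outer M.
Proof.
elim: n M => [|n IH] M Hn [Hc Hd Hs Hx Hg]; constructor => d Hleg;
  have /and3P [dM adM Hs'] := Hleg.
  by have := card_lt dM; rewrite leqn0 in Hn; rewrite (eqP Hn).
set M' := d |: M.
have HdM' : disj M' := disj_add Hd Hleg.
have Hcr : tau d != alpha d.
  by apply/eqP => E; have := Hx d E; rewrite (negbTE dM) (negbTE adM).
have nocyc : ~~ hcc M'.
  apply/negP => /cyc_ex [x [o [Hb Hall]]].
  case: (Hg x o Hb) => [[y [Sy ay]] | [z1 [z2 [ne S1 S2 n1 n2]]]].
  - have yM := Hall y Sy.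
    by move: (HdM' y yM); rewrite in_setU1 ay orbT.
  - have := Hall z1 S1; have := Hall z2 S2.
    rewrite !in_setU1 (negbTE n1) (negbTE n2) !orbF => /eqP e2 /eqP e1.
    by move: ne; rewrite e1 e2 eqxx.
split => //.
have [ONE|NONE] := classic (exists x o z, [/\ bnd x, S o x z, z \notin M',
   (forall y, S o x y -> y != z -> y \in M') & (forall y, S o x y -> alpha y \notin M')]).
  case: ONE => x [o [z [Hb Sz zM Hall Hlive]]].
  apply: (Winning (d:=z)).
    exact: (complete_legal HdM' Hs' Sz zM (Hlive z Sz) Hall).
  left; apply: (cyc_of (o:=o) Hb) => y Sy; rewrite in_setU1.
  have [->|yz] := eqVneq y z; first by [].
  by rewrite (Hall y Sy yz) orbT.
have Hleg2 := mirror_legal Hc Hleg Hcr.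
apply: (Winning Hleg2).
set N := sig d |: M'.
have [C|NC] := boolP (hcc N); [by left|right].
have HcN : sigclosed N by exact: sigclosed_add2.
have HxN : crossm N.
  move=> y E; case/orP: (Hx y E) => h; apply/orP; [left|right];
  by rewrite !in_setU1 h !orbT.
have key : forall x o, bnd x -> (forall y, S o x y -> alpha y \notin N) ->
   (forall w1 w2, S o x w1 -> S o x w2 -> w1 \notin N -> w2 \notin N -> w1 = w2) ->
   exists z, [/\ S o x z, z \notin N & S o x (sig d)].
  move=> x o Hb Hlive Huniq.
  have [z [Sz zN]] : exists z, S o x z /\ z \notin N.
    apply: NNPP => H; move/negP: NC; apply; apply: (cyc_of (o:=o) Hb) => y Sy.
    by apply: contraT => yN; exfalso; apply: H; exists y.
  exists z; split => //.
  apply: NNPP => nS; apply: NONE; exists x, o, z; split => //.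
  - by move: zN; rewrite /N in_setU1 negb_or => /andP [_ ->].
  - move=> y Sy yz.
    have yN : y \in N.
      by apply: contraT => yN; move: yz; rewrite (Huniq y z Sy Sz yN zN) eqxx.
    move: yN; rewrite /N in_setU1 => /orP [/eqP E|//].
    by exfalso; apply: nS; rewrite -E.
  - move=> y Sy; apply: contra (Hlive y Sy); rewrite /N in_setU1 => ->.
    by rewrite orbT.
apply: IH.
  have h1 := card_lt (proj1 (andP Hleg2)); have h2 := card_lt dM.
  rewrite -/M' -/N in h1 h2; lia.
split => //.
- exact: disj_add HdM' Hleg2.
- by case/and3P: Hleg2.
move=> x o Hb.
have [Hdead|Hnd] := classic (exists y, S o x y /\ alpha y \in N); first by left.
have [H2|Hn2] := classic (exists z1 z2,
   [/\ z1 != z2, S o x z1, S o x z2, z1 \notin N & z2 \notin N]); first by right.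
exfalso.
have Hlive : forall y, S o x y -> alpha y \notin N.
  by move=> y Sy; apply/negP => ay; apply: Hnd; exists y.
have Huniq : forall w1 w2, S o x w1 -> S o x w2 -> w1 \notin N -> w2 \notin N -> w1 = w2.
  move=> w1 w2 S1 S2 n1 n2; case: (eqVneq w1 w2) => // ne; exfalso.
  by apply: Hn2; exists w1, w2; split.
have [z [Sz zN Ssd]] := key x o Hb Hlive Huniq.
have Hb' := bnd_sig Hb.
have Hlive' : forall y, S o (sig x) y -> alpha y \notin N.
  by move=> y Sy; have := Hlive _ (S_sig' Sy); rewrite -sigA HcN.
have Huniq' : forall w1 w2, S o (sig x) w1 -> S o (sig x) w2 -> w1 \notin N ->
    w2 \notin N -> w1 = w2.
  move=> w1 w2 S1 S2 n1 n2; apply: sig_inj; apply: Huniq;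
    [exact: S_sig' S1 | exact: S_sig' S2 | by rewrite HcN | by rewrite HcN].
have [_ [_ _ Ssd']] := key (sig x) o Hb' Hlive' Huniq'.
have Ssz : S o x (sig z) := S_trans Ssd' Ssd (S_sig Sz).
have sN : sig z \notin N by rewrite HcN.
have E := Huniq _ _ Ssz Sz sN zN.
have Et : tau z = alpha z by rewrite -[tau z]Ha2 -/(sig z) E.
by case/orP: (HxN z Et) => h; [move: zN | move: (Hlive z Sz)]; rewrite h.
Qed.

Lemma S_self o x : S o x (fo o x).
Proof. by rewrite /S foK; exact: connect0. Qed.

Lemma part1 : (forall d, tau d != alpha d) -> losing alpha rho outer set0.
Proof.
move=> Hnc; apply: (main (n := #|D|)); first exact: max_card.
split.
- by move=> y; rewrite !inE.
- by move=> y; rewrite inE.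
- rewrite hss_E; apply/existsPn => x; rewrite negb_or; apply/andP; split;
  by apply/negP => /forallP/(_ x)/implyP/(_ (connect0 _ _)); rewrite inE.
- by move=> y E; exfalso; move: (Hnc y); rewrite E eqxx.
- move=> x o Hb; right.
  have [p [q [Sp _ pz _ _]]] := nbrs (S_self o x).
  by exists p, (fo o x); split => //; rewrite ?inE //; exact: S_self.
Qed.

Lemma part2 c : (forall x y : D, connect (fun u v => (v == alpha u) || (v == rho u)) x y) ->
  #|[set d | tau d == alpha d]| <= 2 -> tau c = alpha c -> 2 < #|D| ->
  winning alpha rho outer set0.
Proof.
move=> Hconn Hcard Ec HD.
have sc : sig c = c by rewrite /sig Ec Ha2.
have rac_rc : rho (alpha c) = alpha c -> rho c = c.
  by move=> rac; have := Htr (alpha c); rewrite rac Hta Ec Ha2.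
have deg : rho c != c.
  apply/eqP => rc.
  have rac : rho (alpha c) = alpha c by have := Htr c; rewrite rc Ec.
  set A := [set c; alpha c].
  have cl : forall u, u \in A -> forall v, (v == alpha u) || (v == rho u) -> v \in A.
    move=> u; rewrite !inE => /orP [] /eqP -> v /orP [] /eqP ->;
    by rewrite /A !inE ?Ha2 ?rc ?rac eqxx ?orbT.
  have pth : forall p u, u \in A -> path (fun u v => (v == alpha u) || (v == rho u)) u p ->
      last u p \in A.
    elim=> [|v p IHp] u uA //= /andP [uv Hp]; apply: IHp Hp; exact: cl uA v uv.
  have : #|[set: D]| <= #|A|.
    apply: subset_leq_card; apply/subsetP => y _.
    case/connectP: (Hconn c y) => p Hp ->; apply: pth Hp; by rewrite !inE eqxx.
  by rewrite cardsT cards2; move: HD; case: (c != alpha c) => /=; lia.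
have Hleg : lg set0 c.
  rewrite /legal !inE /= hss_E; apply/existsPn => x; rewrite negb_or; apply/andP; split.
  - apply/negP => H.
    have h1 := implyP (forallP H x) (connect0 _ _).
    have h2 := implyP (forallP H (rho x)) (fconnect1 _ _).
    rewrite !inE orbF in h1; rewrite !inE orbF in h2.
    have rx : rho x = x by apply: alpha_inj; rewrite (eqP h1) (eqP h2).
    have xc : x = alpha c by rewrite -(eqP h1) Ha2.
    by move: deg; rewrite rac_rc ?eqxx // -xc.
  - apply/negP => H.
    have h1 := implyP (forallP H x) (connect0 _ _).
    have h2 := implyP (forallP H (rho x)) (fconnect1 _ _).
    rewrite !inE orbF in h1; rewrite !inE orbF in h2.
    have rx : rho c = c by rewrite -{1}(eqP h1) (eqP h2).
    by rewrite rx eqxx in deg.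
apply: (Winning Hleg); right.
apply: (main (n := #|D|)); first exact: max_card.
have Hd1 : disj (c |: set0).
  by move=> y; rewrite !inE !orbF => /eqP ->; exact: Ha1.
split => //.
- by move=> y; rewrite !inE (can2_eq sigK sigK) sc.
- by case/and3P: Hleg.
- move=> y E.
  have [->|yc] := eqVneq y c; first by rewrite !inE eqxx.
  have [->|ayc] := eqVneq y (alpha c); first by rewrite Ha2 !inE eqxx orbT.
  exfalso.
  have sub : y |: [set c; alpha c] \subset [set d | tau d == alpha d].
    apply/subsetP => u; rewrite !inE => /or3P [] /eqP ->; apply/eqP => //.
    by rewrite Hta Ec Ha2.
  have := subset_leq_card sub; rewrite cardsU1 cards2 !inE negb_or yc ayc.
  rewrite eq_sym Ha1 /= => h; have := leq_trans h Hcard; by [].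
- move=> x o Hb.
  have [Sc|nSc] := boolP (S o x c).
    have [p [q [Sp Sq pc qc [Hp Hq]]]] := nbrs Sc.
    have [epq|npq] := eqVneq p q.
      left; exists q; split => //.
      have -> : q = alpha c.
        apply: esym; apply: Hmulti => //; rewrite Ha2 -epq //.
      by rewrite Ha2 !inE eqxx.
    by right; exists p, q; split => //; rewrite !inE negb_or ?pc ?qc.
  have [p [q [Sp _ pz _ _]]] := nbrs (S_self o x).
  right; exists p, (fo o x); split => //; first exact: S_self.
  + by rewrite !inE orbF; apply: contra nSc => /eqP <-.
  + by rewrite !inE orbF; apply: contra nSc => /eqP <-; exact: S_self.
Qed.
End Game.

Theorem corollary5p3 (D : finType) (alpha rho tau : {perm D}) (outer : D) :
  plane_board alpha rho ->
  reflection_symmetry alpha rho outer tau ->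
  (* no edge lies along the axis of symmetry *)
  (forall d, tau d != d) ->
  (* at most one edge crosses the axis (an edge crossing the axis has its two darts swapped) *)
  #|[set d | tau d == alpha d]| <= 2 ->
  ((forall d, tau d != alpha d) -> player2_wins alpha rho outer) /\
  ((exists d, tau d = alpha d) -> 2 < #|D| -> player1_wins alpha rho outer).
Proof.
move=> [[Ha2 Ha1] Hconn _ Hloop Hmulti] [Ht2 Hta Htr Hout] Htd Hcard; split.
  move=> Hnc; exact: (part1 Ha2 Ha1 Hloop Hmulti Ht2 Hta Htr Hout Htd Hnc).
move=> [c Ec] HD; exact: (part2 Ha2 Ha1 Hloop Hmulti Ht2 Hta Htr Hout Htd Hconn Hcard Ec HD).
Qed.
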